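(* Let $A$ be a finite nonempty set and $Q\subseteq\mathrm{Rel}(A)$. The following are equivalent: (i) $\mathrm{Pol}\,Q=(\mathrm{End}\,Q)^{*}$; (ii) there exists $Q'\subseteq\mathrm{gQuord}(A)$ with $\mathrm{Pol}\,Q=\mathrm{Pol}\,Q'$; (ii)$'$ there exists $Q'\subseteq\mathrm{gQuord}(A)$ with $[Q]_{\exists,\wedge,=}=[Q']_{\exists,\wedge,=}$; (ii)$''$ $[Q]_{\exists,\wedge,=}=\big[[Q]_{\exists,\wedge,=}\cap\mathrm{gQuord}(A)\big]_{\exists,\wedge,=}$.
   Context: $\mathrm{Rel}(A)$ is the set of all finitary relations on $A$. An operation preserves a relation if componentwise application to tuples of the relation yields a tuple of the relation; $\mathrm{Pol}\,Q$ (resp. $\mathrm{End}\,Q$) is the set of all finitary operations (resp. unary maps) preserving every relation in $Q$. A translation of an $n$-ary $f$ is a unary map $x\mapsto f(a_1,\dots,a_{i-1},x,a_{i+1},\dots,a_n)$ with fixed $a_j\in A$; $\mathrm{trl}(f)$ is the set of translations ($\{f\}$ for unary $f$); $M^*:=\{f\mid\mathrm{trl}(f)\subseteq M\}$ for $M\subseteq A^A$. A relation $\rho\subseteq A^m$ is a generalized quasiorder if it is reflexive and for every $m\times m$-matrix over $A$ whose rows and columns all lie in $\rho$, its diagonal lies in $\rho$; $\mathrm{gQuord}(A)$ is the set of all generalized quasiorders on $A$. $[Q]_{\exists,\wedge,=}$ is the relational clone generated by $Q$, i.e., the set of relations definable from $Q$ by primitive positive formulas (using only relation symbols, equality, $\exists$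 and $\wedge$). *)

(* Defs.v *)
From mathcomp Require Import all_boot.
Set Implicit Arguments. Unset Strict Implicit. Unset Printing Implicit Defensive.

Section Defs.
Variable A : finType.

(* A finitary relation on A: an arity m >= 1 and a set of m-tuples
   (tuples are finite functions 'I_m -> A). Rel(A) = all such records;
   subsets of Rel(A) are predicates relA -> Prop. *)
Record relA := RelA { rar : nat; rar_gt0 : 0 < rar;
                      rset : {set {ffun 'I_rar -> A}} }.

Record opA := OpA { oar : nat; oar_gt0 : 0 < oar;
                    ofun : {ffun 'I_oar -> A} -> A }.

Definition preserves (f : opA) (rho : relA) : Prop :=
  forall r : 'I_(oar f) -> {ffun 'I_(rar rho) -> A},
    (forall j, r j \in rset rho) ->
    [ffun i : 'I_(rar rho) => @ofun f [ffun j : 'I_(oar f) => r j i]] \in rset rho.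

Definition Pol (Q : relA -> Prop) (f : opA) : Prop :=
  forall rho, Q rho -> preserves f rho.

Definition End_ (Q : relA -> Prop) (g : A -> A) : Prop :=
  forall rho, Q rho -> forall r, r \in rset rho -> [ffun i => g (r i)] \in rset rho.

Definition translation (f : opA) (i : 'I_(oar f)) (a : 'I_(oar f) -> A)
  : A -> A := fun x => @ofun f [ffun j : 'I_(oar f) => if j == i then x else a j].

Definition star (M : (A -> A) -> Prop) (f : opA) : Prop :=
  forall i a, M (@translation f i a).

Definition gQuord (rho : relA) : Prop :=
  (forall x : A, [ffun _ => x] \in rset rho) /\
  (forall M : 'I_(rar rho) -> 'I_(rar rho) -> A,
     (forall i, [ffun j => M i j] \in rset rho) ->
     (forall j, [ffun i => M i j] \in rset rho) ->
     [ffun i => M i i] \in rset rho).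

Inductive ppf : Type :=
  | PFalse : ppf
  | PEq : nat -> nat -> ppf
  | PAtom : forall rho : relA, ('I_(rar rho) -> nat) -> ppf
  | PAnd : ppf -> ppf -> ppf
  | PEx : nat -> ppf -> ppf.

Fixpoint atoms_in (Q : relA -> Prop) (phi : ppf) : Prop :=
  match phi with
  | PFalse => True
  | PEq _ _ => True
  | PAtom rho _ => Q rho
  | PAnd p q => atoms_in Q p /\ atoms_in Q q
  | PEx _ p => atoms_in Q p
  end.

Fixpoint sat (s : nat -> A) (phi : ppf) : Prop :=
  match phi with
  | PFalse => False
  | PEq i j => s i = s j
  | PAtom rho v => [ffun k => s (v k)] \in rset rho
  | PAnd p q => sat s p /\ sat s q
  | PEx k p => exists x : A, sat (fun n => if n == k then x else s n) p
  end.

(* [Q]_{exists,/\,=}: relations defined by a pp-formula over Q, the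
   tuple being the values of the variables 0..m-1 (remaining free
   variables are existentially quantified). *)
Definition ppclone (Q : relA -> Prop) (rho : relA) : Prop :=
  exists phi : ppf, atoms_in Q phi /\
    forall r : {ffun 'I_(rar rho) -> A},
      r \in rset rho <->
      exists s : nat -> A, (forall i : 'I_(rar rho), s i = r i) /\ sat s phi.

End Defs.

(* Main.v *)
Require Import Defs.
From mathcomp Require Import all_boot.
From Stdlib Require Import ClassicalEpsilon.
Set Implicit Arguments. Unset Strict Implicit. Unset Printing Implicit Defensive.

Section Basics.
Variable A : finType.
Implicit Types (Q : relA A -> Prop) (rho : relA A) (f : opA A).

Definition pb (P : Prop) : bool := if excluded_middle_informative P then true else false.
Lemma pbP P : pb P <-> P.
Proof. rewrite /pb; case: excluded_middle_informative => p; split => // /p. Qed.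

Lemma sat_ext (s s' : nat -> A) (phi : ppf A) :
  (forall n, s n = s' n) -> sat s phi -> sat s' phi.
Proof.
elim: phi s s' => [|i j|r v|p IHp q IHq|k p IHp] s s' E /=.
- by [].
- by rewrite -!E.
- have -> : [ffun k => s' (v k)] = [ffun k => s (v k)] by apply/ffunP=> k; rewrite !ffunE E.
  by [].
- by move=> [H1 H2]; split; [exact: IHp E H1|exact: IHq E H2].
- case=> x Hx; exists x; apply: IHp Hx => n; by case: (n == k).
Qed.

Lemma sat_pres Q f (phi : ppf A) (ss : 'I_(oar f) -> nat -> A) :
  Pol Q f -> atoms_in Q phi -> (forall j, sat (ss j) phi) ->
  sat (fun n => @ofun _ f [ffun j => ss j n]) phi.
Proof.
move=> Hf; elim: phi ss => [|a b|r v|p IHp q IHq|k p IHp] ss /= HA Hs.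
- by have := Hs (Ordinal (oar_gt0 f)).
- congr (@ofun _ f _); apply/ffunP => j; rewrite !ffunE; exact: Hs.
- have := Hf r HA (fun j => [ffun k => ss j (v k)]) Hs.
  suff -> : [ffun k => @ofun _ f [ffun j => ss j (v k)]] =
     [ffun i => @ofun _ f [ffun j => [ffun k => ss j (v k)] i]] by [].
  apply/ffunP => i; rewrite !ffunE; congr (@ofun _ f _); apply/ffunP => j; rewrite !ffunE.
  by [].
- case: HA => Hp Hq; split.
  + apply: IHp => // j; by case: (Hs j).
  + apply: IHq => // j; by case: (Hs j).
- have /fin_all_exists [xs Hxs] := Hs.
  exists (@ofun _ f [ffun j => xs j]).
  have := IHp (fun j n => if n == k then xs j else ss j n) HA Hxs.
  apply: sat_ext => n; case: (n == k) => //.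
Qed.

Lemma pp_pres Q f rho : Pol Q f -> ppclone Q rho -> preserves f rho.
Proof.
move=> Hf [phi [HA Hr]] r Hrj.
have /fin_all_exists [ss Hss] : forall j, exists s : nat -> A,
   (forall i : 'I_(rar rho), s i = r j i) /\ sat s phi by move=> j; apply/(Hr _).
apply/(Hr _); exists (fun n => @ofun _ f [ffun j => ss j n]); split.
- move=> i; rewrite ffunE; congr (@ofun _ f _); apply/ffunP => j; rewrite !ffunE.
  exact: (proj1 (Hss j) i).
- apply: (sat_pres (Q:=Q)) => // j; exact: (proj2 (Hss j)).
Qed.

Lemma pp_atom Q rho : Q rho -> ppclone Q rho.
Proof.
move=> HQ; exists (@PAtom _ rho (fun k => nat_of_ord k)); split => // r; split.
- move=> Hr; exists (fun n => r (insubd (Ordinal (rar_gt0 rho)) n)); split.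
  + by move=> i; rewrite valKd.
  + rewrite /=; suff -> : [ffun k => r (insubd (Ordinal (rar_gt0 rho)) (nat_of_ord k))] = r by [].
    by apply/ffunP => k; rewrite ffunE valKd.
- case=> s [Hs /=]; suff -> : [ffun k => s (nat_of_ord k)] = r by [].
  by apply/ffunP => k; rewrite ffunE Hs.
Qed.

Definition End1 rho (g : A -> A) :=
  forall r, r \in rset rho -> [ffun i => g (r i)] \in rset rho.

Lemma gq_trans rho f : gQuord rho -> preserves f rho ->
  forall k a, End1 rho (@translation _ f k a).
Proof.
move=> [Hrefl _] Hp k a r Hr.
have H : forall j, (if j == k then r else [ffun _ => a j]) \in rset rho.
  by move=> j; case: (j == k).
suff -> : [ffun i => @translation _ f k a (r i)] =
  [ffun i => @ofun _ f [ffun j => (if j == k then r else [ffun _ => a j]) i]] by apply: Hp.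
apply/ffunP => i; rewrite !ffunE /translation; congr (@ofun _ f _); apply/ffunP => j.
by rewrite !ffunE; case: (j == k); rewrite ?ffunE.
Qed.

Lemma gq_pres rho f : gQuord rho -> (forall k a, End1 rho (@translation _ f k a)) ->
  preserves f rho.
Proof.
move=> [Hrefl Hmat] Ht r Hr.
pose i0 := Ordinal (rar_gt0 rho).
pose T k (c : 'I_(oar f) -> A) := [ffun i : 'I_(rar rho) =>
   @ofun _ f [ffun j : 'I_(oar f) => if j < k then r j i else c j]].
have HT : forall k c, T k c \in rset rho.
  elim=> [|k IH] c.
  - suff -> : T 0 c = [ffun _ => @ofun _ f [ffun j => c j]] by [].
    by apply/ffunP => i; rewrite !ffunE; congr (@ofun _ f _); apply/ffunP => j; rewrite !ffunE.
  - case: (ltnP k (oar f)) => [ltk|lek].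
    + pose kk := Ordinal ltk.
      pose M i i' := @ofun _ f [ffun j : 'I_(oar f) =>
          if j < k then r j i else if j == kk then r kk i' else c j].
      suff -> : T k.+1 c = [ffun i => M i i].
        apply: (Hmat M) => [i|i'].
        * suff -> : [ffun i' => M i i'] = [ffun i' => @translation _ f kk
             (fun j => if j < k then r j i else c j) (r kk i')] by apply: Ht; apply: Hr.
          apply/ffunP => i'; rewrite !ffunE /M /translation; congr (@ofun _ f _).
          apply/ffunP => j; rewrite !ffunE.
          case: eqP => [->|_] //; by rewrite /= ltnn.
        * suff -> : [ffun i => M i i'] = T k (fun j => if j == kk then r kk i' else c j)
            by apply: IH.
          apply/ffunP => i; rewrite !ffunE /M; congr (@ofun _ f _).
      apply/ffunP => i; rewrite !ffunE /M; congr (@ofun _ f _).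
      apply/ffunP => j; rewrite !ffunE.
      case: (ltngtP j k) => [jk|kj|jk].
      * by rewrite ltnS (ltnW jk).
      * rewrite ltnS leqNgt kj /= -val_eqE /=.
        by rewrite (gtn_eqF kj).
      * have -> : j = kk by apply: val_inj.
        by rewrite /= ltnSn eqxx.
    + suff -> : T k.+1 c = T k c by apply: IH.
      apply/ffunP => i; rewrite !ffunE; congr (@ofun _ f _).
      apply/ffunP => j; rewrite !ffunE.
      have jk : j < k := leq_trans (ltn_ord j) lek.
      by rewrite jk ltnS (ltnW jk).
suff -> : [ffun i => @ofun _ f [ffun j => r j i]] = T (oar f) (fun j => r j i0) by apply: HT.
apply/ffunP => i; rewrite !ffunE; congr (@ofun _ f _).
by apply/ffunP => j; rewrite !ffunE ltn_ord.
Qed.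

Definition unop (g : A -> A) : opA A := @OpA A 1 isT (fun x => g (x ord0)).

Lemma End_unop Q g : End_ Q g <-> Pol Q (unop g).
Proof.
split.
- move=> H rho Hq r Hr; have := H rho Hq (r ord0) (Hr ord0).
  suff -> : [ffun i => @ofun _ (unop g) [ffun j => r j i]] = [ffun i => g (r ord0 i)] by [].
  by apply/ffunP=> i; rewrite !ffunE /= ffunE.
- move=> H rho Hq r Hr; have := H rho Hq (fun _ => r) (fun _ => Hr).
  suff -> : [ffun i => @ofun _ (unop g) [ffun j => r i]] = [ffun i => g (r i)] by [].
  by apply/ffunP=> i; rewrite !ffunE /= ffunE.
Qed.

Lemma End_ext Q g h : (forall x, g x = h x) -> End_ Q g -> End_ Q h.
Proof.
move=> E H rho Hq r Hr; have := H rho Hq r Hr.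
suff -> : [ffun i => h (r i)] = [ffun i => g (r i)] by [].
by apply/ffunP=> i; rewrite !ffunE E.
Qed.


Section Galois.
Variables (Q : relA A -> Prop) (rho : relA A).
Hypothesis Hinv : forall f, Pol Q f -> preserves f rho.
Local Notation m := (rar rho).
Local Notation N := #|rset rho|.
Local Notation X := {ffun 'I_N -> A}.

Definition cT := {sigma : relA A & 'I_(rar sigma) -> X}.
Definition valid (c : cT) := Q (projT1 c) /\
  forall k : 'I_N, [ffun j => projT2 c j k] \in rset (projT1 c).
Definition satc (h : X -> A) (c : cT) : bool :=
  [ffun j => h (projT2 c j)] \in rset (projT1 c).
Definition bad (h : {ffun X -> A}) := exists c, valid c /\ ~~ satc h c.
Definition ch (h : {ffun X -> A}) : option cT :=
  match excluded_middle_informative (bad h) with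
  | left H => Some (proj1_sig (constructive_indefinite_description _ H))
  | right _ => None end.

Lemma ch_some h c : ch h = Some c -> valid c /\ ~~ satc h c.
Proof.
rewrite /ch; case: excluded_middle_informative => // H [<-].
exact: proj2_sig (constructive_indefinite_description _ H).
Qed.

Lemma ch_none h : ch h = None -> forall c, valid c -> satc h c.
Proof.
rewrite /ch; case: excluded_middle_informative => // H _ c Hc.
case E: (satc h c) => //; exfalso; apply: H; exists c; by rewrite E.
Qed.

Definition rk (x : X) : nat := m + enum_rank x.
Definition col (i : 'I_m) : X := [ffun k : 'I_N => (enum_val k : {ffun 'I_m -> A}) i].

Definition bigAnd (T : Type) (l : seq T) (G : T -> ppf A) :=
  foldr (fun x acc => PAnd (G x) acc) (PEq A 0 0) l.

Lemma sat_bigAnd (T : eqType) s (l : seq T) G :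
  sat s (bigAnd l G) <-> forall x, x \in l -> sat s (G x).
Proof.
elim: l => [|y l IH] /=; first by split.
split.
- move=> [H1 /IH H2] x; rewrite inE; case/orP => [/eqP -> //|]; exact: H2.
- move=> H; split; first by apply: H; rewrite inE eqxx.
  apply/IH => x Hx; apply: H; by rewrite inE Hx orbT.
Qed.

Lemma atoms_bigAnd (T : eqType) (l : seq T) G :
  (forall x, x \in l -> atoms_in Q (G x)) -> atoms_in Q (bigAnd l G).
Proof.
elim: l => [|y l IH] //= H; split; first by apply: H; rewrite inE eqxx.
apply: IH => x Hx; apply: H; by rewrite inE Hx orbT.
Qed.

Definition Fh (h : {ffun X -> A}) : ppf A :=
  match ch h with
  | Some c => @PAtom A (projT1 c) (fun j => rk (projT2 c j))
  | None => PEq A 0 0 end.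

Definition phiG : ppf A :=
  PAnd (bigAnd (enum 'I_m) (fun i => PEq A i (rk (col i))))
       (bigAnd (enum {ffun X -> A}) Fh).

Definition op_of (Hn : 0 < N) (h : X -> A) : opA A := @OpA A N Hn h.

Lemma pol_of Hn h : (forall c, valid c -> satc h c) -> Pol Q (op_of Hn h).
Proof.
move=> H sigma Hs r Hr.
have := H (existT _ sigma (fun j => [ffun k => r k j])) _.
apply; split => // k /=.
suff -> : [ffun j => [ffun k0 => r k0 j] k] = r k by apply: Hr.
by apply/ffunP=> j; rewrite !ffunE.
Qed.

Lemma galois : ppclone Q rho.
Proof.
case: (posnP N) => [N0|Npos].
  exists (PFalse A); split => // r; split => [Hr|[s [_ []]]].
  by move: Hr; rewrite (card0_eq N0).
exists phiG; split.
  split; first by apply: atoms_bigAnd.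
  apply: atoms_bigAnd => h _; rewrite /Fh; case E: (ch h) => [c|] //=.
  exact: (proj1 (proj1 (ch_some E))).
move=> r; split.
- move=> Hr.
  pose k0 := enum_rank_in Hr r.
  have Hk0 : enum_val k0 = r := enum_rankK_in Hr Hr.
  pose i0 : 'I_m := Ordinal (rar_gt0 rho).
  pose s n := if n < m then r (insubd i0 n) else
     if [pick x : X | rk x == n] is Some x then x k0 else r i0.
  have Hs : forall x, s (rk x) = x k0.
    move=> x; rewrite /s /rk ltnNge leq_addr /=.
    case: pickP => [y /eqP /addnI /val_inj /enum_rank_inj -> //|/(_ x)]; by rewrite eqxx.
  exists s; split.
    by move=> i; rewrite /s ltn_ord valKd.
  split.
    apply/sat_bigAnd => i _ /=; by rewrite Hs /col ffunE Hk0 /s ltn_ord valKd.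
  apply/sat_bigAnd => h _; rewrite /Fh; case E: (ch h) => [c|] //=.
  have [[_ Hv] _] := ch_some E.
  suff -> : [ffun j => s (rk (projT2 c j))] = [ffun j => projT2 c j k0] by apply: Hv.
  by apply/ffunP => j; rewrite !ffunE Hs.
- case=> s [Hsr [/sat_bigAnd H1 /sat_bigAnd H2]].
  pose hs : {ffun X -> A} := [ffun x => s (rk x)].
  have Hh : forall c, valid c -> satc hs c.
    move=> c Hc; case E: (ch hs) => [c'|]; last exact: ch_none E c Hc.
    have [_ Hn] := ch_some E.
    have := H2 hs; rewrite mem_enum /Fh E /= => /(_ isT) Hsat.
    move: Hn; rewrite /satc.
    suff -> : [ffun j => hs (projT2 c' j)] = [ffun j => s (rk (projT2 c' j))] by rewrite Hsat.
    by apply/ffunP => j; rewrite !ffunE.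
  have := Hinv (@pol_of Npos hs Hh) (fun k => enum_valP k).
  suff -> : r = [ffun i => @ofun _ (op_of Npos hs) [ffun j => (enum_val j : {ffun 'I_m -> A}) i]] by [].
  apply/ffunP => i; rewrite !ffunE /= -Hsr.
  have := H1 i; rewrite mem_enum /= => /(_ isT) ->. by rewrite ffunE.
Qed.

End Galois.

Section M.
Variables (An : 0 < #|A|) (Q : relA A -> Prop).
Hypothesis Hi : forall f, Pol Q f <-> star (End_ Q) f.

Definition rhoM : relA A := @RelA A #|A| An
  [set t : {ffun 'I_#|A| -> A} | pb (exists g, End_ Q g /\ forall i : 'I_#|A|, t i = g (enum_val i))].

Lemma rhoM_P t : t \in rset rhoM <-> exists g, End_ Q g /\ forall i, t i = g (enum_val i).
Proof. rewrite /rhoM /= inE; exact: pbP. Qed.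

Lemma const_End c : End_ Q (fun _ => c).
Proof.
pose p2 := @OpA A 2 isT (fun x => x ord0).
have Hp : Pol Q p2.
  move=> rho Hq r Hr.
  suff -> : [ffun i => @ofun _ p2 [ffun j => r j i]] = r ord0 by apply: Hr.
  by apply/ffunP=> i; rewrite ffunE /p2 /= ffunE.
have := (proj1 (Hi p2)) Hp (Ordinal (isT : 1 < 2)) (fun _ => c).
apply: End_ext => x; by rewrite /translation /= ffunE.
Qed.

Lemma comp_End g h : End_ Q g -> End_ Q h -> End_ Q (fun x => g (h x)).
Proof.
move=> Hg Hh rho Hq r Hr; have := Hg rho Hq _ (Hh rho Hq r Hr).
suff -> : [ffun i => g (h (r i))] = [ffun i => g ([ffun i => h (r i)] i)] by [].
by apply/ffunP => i; rewrite !ffunE.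
Qed.

Lemma id_End : End_ Q (fun x => x).
Proof.
move=> rho Hq r Hr; suff -> : [ffun i => r i] = r by [].
by apply/ffunP => i; rewrite !ffunE.
Qed.

Lemma End1M g : End1 rhoM g <-> End_ Q g.
Proof.
split.
- move=> H.
  have : [ffun i => enum_val i] \in rset rhoM.
    apply/rhoM_P; exists (fun x => x); split; [exact: id_End|by move=> i; rewrite ffunE].
  move/H/rhoM_P => [h [Hh E]].
  apply: End_ext Hh => x; rewrite -(enum_rankK x) -E !ffunE //.
- move=> Hg t /rhoM_P [h [Hh E]]; apply/rhoM_P; exists (fun x => g (h x)); split.
    exact: comp_End.
  by move=> i; rewrite ffunE E.
Qed.

Lemma gqM : gQuord rhoM.
Proof.
split.
  move=> x; apply/rhoM_P; exists (fun _ => x); split; [exact: const_End|by move=> i; rewrite ffunE].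
move=> M Hrow Hcol.
have /fin_all_exists [g Hg] := fun i => proj1 (rhoM_P _) (Hrow i).
have /fin_all_exists [h Hh] := fun j => proj1 (rhoM_P _) (Hcol j).
pose F := @OpA A 2 isT (fun x => M (enum_rank (x ord0)) (enum_rank (x ord_max))).
have HF : Pol Q F.
  apply/Hi => i a.
  case: i => [[|[|//]] Hi'].
  - apply: (End_ext _ (proj1 (Hh (enum_rank (a ord_max))))) => x.
    rewrite /translation /= !ffunE.
    have -> : (@ord0 1 == Ordinal Hi') = true by apply/eqP/val_inj.
    have -> : (@ord_max 1 == Ordinal Hi') = false by [].
    by have := proj2 (Hh (enum_rank (a ord_max))) (enum_rank x); rewrite ffunE enum_rankK => ->.
  - apply: (End_ext _ (proj1 (Hg (enum_rank (a ord0))))) => x.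
    rewrite /translation /= !ffunE.
    have -> : (@ord_max 1 == Ordinal Hi') = true by apply/eqP/val_inj.
    have -> : (@ord0 1 == Ordinal Hi') = false by [].
    by have := proj2 (Hg (enum_rank (a ord0))) (enum_rank x); rewrite ffunE enum_rankK => ->.
pose d x := M (enum_rank x) (enum_rank x).
have Hd : End_ Q d.
  move=> rho Hq r Hr; have := HF rho Hq (fun _ => r) (fun _ => Hr).
  suff -> : [ffun i => d (r i)] = [ffun i => @ofun _ F [ffun j => r i]] by [].
  by apply/ffunP => i; rewrite !ffunE /= !ffunE.
apply/rhoM_P; exists d; split => // i; by rewrite ffunE /d enum_valK.
Qed.

Lemma i_ii : exists Q' : relA A -> Prop,
  (forall rho, Q' rho -> gQuord rho) /\ (forall f, Pol Q f <-> Pol Q' f).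
Proof.
exists (fun sigma => sigma = rhoM); split; first by move=> ? ->; exact: gqM.
move=> f; split.
- move/Hi => Hs _ ->; apply: gq_pres gqM _ => k a; apply/End1M; exact: Hs.
- move=> Hp; apply/Hi => k a; apply/End1M; exact: gq_trans gqM (Hp _ erefl) k a.
Qed.
End M.

Lemma ii_i Q Q' : (forall rho, Q' rho -> gQuord rho) -> (forall f, Pol Q f <-> Pol Q' f) ->
  forall f, Pol Q f <-> star (End_ Q) f.
Proof.
move=> Hg HQ f; split.
- move=> Hp k a; apply/End_unop/HQ/End_unop => sigma Hs.
  exact: gq_trans (Hg _ Hs) (proj1 (HQ f) Hp sigma Hs) k a.
- move=> Hs; apply/HQ => sigma Hsig; apply: gq_pres (Hg _ Hsig) _ => k a.
  have : End_ Q' (@translation _ f k a) by apply/End_unop/HQ/End_unop; exact: Hs.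
  by move/(_ sigma Hsig).
Qed.

Lemma ii_ii' Q Q' : (forall f, Pol Q f <-> Pol Q' f) ->
  forall rho, ppclone Q rho <-> ppclone Q' rho.
Proof.
move=> HQ rho; split => Hr; apply: galois => f Hf; apply: (pp_pres _ Hr); exact/HQ.
Qed.

Lemma ii'_ii Q Q' : (forall rho, ppclone Q rho <-> ppclone Q' rho) ->
  forall f, Pol Q f <-> Pol Q' f.
Proof.
move=> H f; split => Hf rho Hr; apply: (pp_pres Hf); apply/H; exact: pp_atom.
Qed.

Lemma ii_ii'' Q Q' : (forall rho, Q' rho -> gQuord rho) -> (forall f, Pol Q f <-> Pol Q' f) ->
  forall rho, ppclone Q rho <-> ppclone (fun s => ppclone Q s /\ gQuord s) rho.
Proof.
move=> Hg HQ.
have HQ'Q : forall s, Q' s -> ppclone Q s.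
  move=> s Hs; apply: galois => f Hf; exact: (proj1 (HQ f) Hf s Hs).
move=> rho; split => Hr.
- apply: galois => f Hf; apply: (pp_pres _ Hr); apply/HQ => s Hs.
  apply: Hf; split; [exact: HQ'Q | exact: Hg].
- apply: galois => f Hf; apply: (pp_pres _ Hr) => s [Hs _]; exact: pp_pres Hf Hs.
Qed.

End Basics.

Theorem proposition4p4 (A : finType) (A_nonempty : 0 < #|A|)
    (Q : relA A -> Prop) :
  let i_ := forall f : opA A, Pol Q f <-> star (End_ Q) f in
  let ii := exists Q' : relA A -> Prop,
      (forall rho, Q' rho -> gQuord rho) /\
      (forall f : opA A, Pol Q f <-> Pol Q' f) in
  let ii' := exists Q' : relA A -> Prop,
      (forall rho, Q' rho -> gQuord rho) /\
      (forall rho, ppclone Q rho <-> ppclone Q' rho) in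
  let ii'' := forall rho, ppclone Q rho <->
      ppclone (fun sigma => ppclone Q sigma /\ gQuord sigma) rho in
  (i_ <-> ii) /\ (i_ <-> ii') /\ (i_ <-> ii'').
Proof.
move=> i_ ii ii' ii''.
have i2 : i_ -> ii by move=> H; exact: (@i_ii A A_nonempty Q H).
have i2' : ii -> i_ by move=> [Q' [Hg HQ]]; exact: ii_i Hg HQ.
have iii' : ii -> ii' by move=> [Q' [Hg HQ]]; exists Q'; split => //; exact: ii_ii'.
have ii'i : ii' -> ii by move=> [Q' [Hg HQ]]; exists Q'; split => //; exact: ii'_ii.
have iii'' : ii -> ii'' by move=> [Q' [Hg HQ]]; exact: ii_ii'' Hg HQ.
have ii''i' : ii'' -> ii'.
  by move=> H; exists (fun s => ppclone Q s /\ gQuord s); split => // s [].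
split; first by split.
split; split => H.
- exact: iii' (i2 H).
- exact: i2' (ii'i H).
- exact: iii'' (i2 H).
- exact: i2' (ii'i (ii''i' H)).
Qed.
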